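(* Let $(S,d)$ be a finite metric space partitioned into two disjoint groups $S=S_1\cup S_2$, let $k_1,k_2$ be nonnegative integers with $k=k_1+k_2$, and let $r^*$ be the optimal radius of the fair $k$-center problem on this instance. For $l\in\{1,2\}$ let $\Gamma_l\subseteq S_l$ be a $2r^*$-independent center set of $S_l$. Suppose that for some $l\in\{1,2\}$ we have $|\Gamma_l|>k_l$ and $|\Gamma_{3-l}|\le k_{3-l}$. Define $\Gamma_l'=\{i\in\Gamma_l : d(i,\Gamma_{3-l})>3r^*\}$ and $C=\Gamma_l'\cup\Gamma_{3-l}$. Then (1) $|\Gamma_l'|\le k_l$, $|\Gamma_{3-l}|\le k_{3-l}$ and $|C|\le k$; and (2) $d(s,C)\le 5r^*$ for every $s\in S$.
   Context: The fair $k$-center problem: a set $C\subseteq S$ is feasible if $|C\cap S_l|\le k_l$ for each group $l$; its cost is $\max_{s\in S}d(s,C)$ with $d(s,C)=\min_{c\in C}d(s,c)$ (and $d(s,\emptyset)=\infty$). The optimal radius $r^*$ is the minimum cost over all feasible $C$. For $T\subseteq S$, a set $\Gamma\subseteq T$ is a $\lambda$-independent center set of $T$ if (1) $d(p,q)>\lambda$ for any two distinct $p,q\in\Gamma$, and (2) for every $p\in T$ there is $q\in\Gamma$ with $d(p,q)\le\lambda$. *)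

(* Defs.v *)
From HB Require Import structures.
From mathcomp Require Import all_boot all_order all_algebra.
From mathcomp Require Import reals constructive_ereal.
Set Implicit Arguments. Unset Strict Implicit. Unset Printing Implicit Defensive.
Import Order.TTheory GRing.Theory Num.Theory.
Local Open Scope ring_scope.
Local Open Scope ereal_scope.

Section FairKCenter.
Variables (R : realType) (T : finType).

Definition is_metric (d : T -> T -> R) : Prop :=
  [/\ forall x y, d x y = 0%R <-> x = y,
      forall x y, d x y = d y x &
      forall x y z, (d x z <= d x y + d y z)%R].

Definition dist (d : T -> T -> R) (s : T) (C : {set T}) : \bar R :=
  \big[Order.min/+oo]_(c in C) (d s c)%:E.

Definition cost (d : T -> T -> R) (C : {set T}) : \bar R :=
  \big[Order.max/-oo]_(s : T) dist d s C.

Definition feasible (Sg : 'I_2 -> {set T}) (kg : 'I_2 -> nat) (C : {set T}) : bool :=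
  [forall l, #|C :&: Sg l| <= kg l]%N.

Definition opt_radius (d : T -> T -> R) (Sg : 'I_2 -> {set T}) (kg : 'I_2 -> nat)
  : \bar R :=
  \big[Order.min/+oo]_(C : {set T} | feasible Sg kg C) cost d C.

Definition independent_center_set (d : T -> T -> R) (lam : \bar R)
  (T0 Gam : {set T}) : Prop :=
  [/\ Gam \subset T0,
      (forall p q, p \in Gam -> q \in Gam -> p != q -> lam < (d p q)%:E) &
      (forall p, p \in T0 -> exists2 q, q \in Gam & (d p q)%:E <= lam)].

End FairKCenter.

Definition other (l : 'I_2) : 'I_2 := if l == ord0 then ord_max else ord0.

(* Main.v *)
Require Import Defs.
From HB Require Import structures.
From mathcomp Require Import all_boot all_order all_algebra.
From mathcomp Require Import reals constructive_ereal.
From mathcomp Require Import lra.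
Import Order.TTheory GRing.Theory Num.Theory.
Local Open Scope ring_scope.
Local Open Scope ereal_scope.

Section Helpers.
Variables (R : realType) (T : finType).

Lemma bigmin_ex (I : finType) (P : pred I) (F : I -> \bar R) (x : R) :
  \big[Order.min/+oo]_(i | P i) F i <= x%:E -> exists2 i, P i & F i <= x%:E.
Proof.
apply: (big_ind (fun v => v <= x%:E -> exists2 i, P i & F i <= x%:E)).
- by rewrite leNgt ltey.
- move=> a b Ha Hb; rewrite ge_min => /orP[/Ha|/Hb]//.
- by move=> i Pi Hi; exists i.
Qed.

Lemma d_ge0 (d : T -> T -> R) x y : is_metric d -> (0 <= d x y)%R.
Proof.
case=> H0 Hs Ht; have := Ht x y x; rewrite (Hs y x) (proj2 (H0 x x) erefl).
move=> h; lra.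
Qed.

Lemma dist_le (d : T -> T -> R) s (C : {set T}) c : c \in C -> dist d s C <= (d s c)%:E.
Proof. by move=> cC; rewrite /dist; apply: bigmin_le_cond. Qed.

Lemma dist_ex (d : T -> T -> R) s (C : {set T}) x :
  dist d s C <= x%:E -> exists2 c, c \in C & (d s c <= x)%R.
Proof. by move/bigmin_ex => [c cC]; rewrite lee_fin; exists c. Qed.

Lemma dist_ge0 (d : T -> T -> R) s (C : {set T}) : is_metric d -> 0 <= dist d s C.
Proof.
move=> hd; apply: le_bigmin; first exact: leey.
by move=> c _; rewrite lee_fin d_ge0.
Qed.

Lemma cost_ge (d : T -> T -> R) s (C : {set T}) : dist d s C <= cost d C.
Proof. exact: (le_bigmax -oo (fun s => dist d s C) s). Qed.

End Helpers.
Arguments dist_le {R T d s C c}.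
Arguments dist_ex {R T d s C x}.
Arguments dist_ge0 {R T d} s C.
Arguments cost_ge {R T} d s C.

Theorem theorem1 (R : realType) (T : finType) (d : T -> T -> R)
  (Sg : 'I_2 -> {set T}) (kg : 'I_2 -> nat) (Gam : 'I_2 -> {set T}) (l : 'I_2) :
  is_metric d ->
  [disjoint Sg ord0 & Sg ord_max] ->
  Sg ord0 :|: Sg ord_max = [set: T] ->
  (forall j, independent_center_set d (2%:E * opt_radius d Sg kg) (Sg j) (Gam j)) ->
  (kg l < #|Gam l|)%N ->
  (#|Gam (other l)| <= kg (other l))%N ->
  let rs := opt_radius d Sg kg in
  let Gam' := [set i in Gam l | 3%:E * rs < dist d i (Gam (other l))] in
  let C := Gam' :|: Gam (other l) in
  [/\ (#|Gam'| <= kg l)%N, (#|Gam (other l)| <= kg (other l))%N,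
      (#|C| <= kg ord0 + kg ord_max)%N &
      forall s : T, dist d s C <= 5%:E * rs].
Proof.
move=> hd hdisj hcov hind hgt hle rs Gam' C; rewrite {}/C.
have hl : l = ord0 \/ l = ord_max.
  by case: l {hgt hle Gam'} => [[|[|n]] Hn] //; [left|right]; apply: val_inj.
have hsum : (kg l + kg (other l) = kg ord0 + kg ord_max)%N.
  by case: hl => ->; rewrite /other ?eqxx //= addnC.
have hcov' : forall x, x \in Sg l \/ x \in Sg (other l).
  move=> x; have : x \in Sg ord0 :|: Sg ord_max by rewrite hcov inE.
  by rewrite inE; case: hl => ->; rewrite /other /= => /orP[]; auto.
have [x0 x0G] : exists x, x \in Gam l.
  by apply/set0Pn; rewrite -card_gt0; apply: leq_ltn_trans hgt.
have rs_ge0 : 0 <= rs.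
  apply: le_bigmin; first exact: leey.
  by move=> Cs _; exact: le_trans (dist_ge0 x0 Cs hd) (cost_ge _ _ _).
have hCcard : (#|Gam'| <= kg l)%N -> (#|Gam' :|: Gam (other l)| <= kg ord0 + kg ord_max)%N.
  move=> h; rewrite -hsum cardsU.
  by apply: leq_trans (leq_subr _ _) _; apply: leq_add.
have hG0 : forall i, (i \in Gam') = (i \in Gam l) && (3%:E * rs < dist d i (Gam (other l))).
  by move=> i; rewrite inE.
have hrs : opt_radius d Sg kg = rs by [].
clearbody Gam'; clearbody rs.
move: rs hrs rs_ge0 hind hG0; case=> [r0| |] //; last first.
  move=> hrs _ hind hG0.
  have HG : Gam' = set0.
    apply/setP => i; rewrite hG0 inE mulry gtr0_sg // mul1e.
    by rewrite ltNge leey andbF.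
  have h0 : (#|Gam'| <= kg l)%N by rewrite HG cards0.
  split => //; first exact: hCcard.
  by move=> s; rewrite mulry gtr0_sg // mul1e leey.
move=> hrs; rewrite lee_fin => r0ge; rewrite hrs => hind hG0.
have hind' j : [/\ Gam j \subset Sg j,
      (forall p q, p \in Gam j -> q \in Gam j -> p != q -> (2 * r0 < d p q)%R) &
      (forall p, p \in Sg j -> exists2 q, q \in Gam j & (d p q <= 2 * r0)%R)].
  case: (hind j) => h1 h2 h3; split => //.
have hdm := hd; case: hd => hd0 hds hdt.
have hG' : forall i, i \in Gam' = (i \in Gam l) && ((3 * r0)%:E < dist d i (Gam (other l))).
  by move=> i; rewrite hG0 EFinM.
have h1 : (#|Gam'| <= kg l)%N.
  have [Cs CsF Csc] : exists2 Cs, feasible Sg kg Cs & cost d Cs <= r0%:E.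
    by apply: bigmin_ex; rewrite -/(opt_radius d Sg kg) hrs.
  pose f i := odflt i [pick c in Cs | (d i c <= r0)%R].
  have fP : forall i, f i \in Cs /\ (d i (f i) <= r0)%R.
    move=> i; rewrite /f; case: pickP => [c /andP[]//|H] /=.
    exfalso; have := cost_ge d i Cs => h.
    have [c cC dc] := dist_ex (le_trans h Csc).
    by have := H c; rewrite cC dc.
  have finj : {in Gam' &, injective f}.
    move=> i j; rewrite !hG' => /andP[iG _] /andP[jG _] fij.
    apply/eqP; apply: contraT => nij.
    case: (hind' l) => _ h2 _; have := h2 _ _ iG jG nij.
    have := hdt i (f i) j; rewrite fij (hds (f j) j).
    case: (fP i) => _; rewrite fij; case: (fP j) => _ a b c e; exfalso; clear -a b c e; lra.
  rewrite -(card_in_imset finj).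
  apply: leq_trans (_ : #|Cs :&: Sg l| <= _)%N; last by move/forallP: CsF.
  apply: subset_leq_card; apply/subsetP => y /imsetP[i iG ->].
  move: iG; rewrite hG' => /andP[iG hlt].
  rewrite inE; case: (fP i) => -> hfi /=.
  case: (hcov' (f i)) => // hfo; exfalso.
  case: (hind' (other l)) => _ _ h3; have [q qG dq] := h3 _ hfo.
  have : dist d i (Gam (other l)) <= (3 * r0)%:E.
    apply: le_trans (dist_le qG) _; rewrite lee_fin.
    have := hdt i (f i) q; move=> H; clear -H hfi dq r0ge; lra.
  by rewrite leNgt hlt.
split => //; first exact: hCcard.
move=> s; rewrite -EFinM.
have hCo : forall q, q \in Gam (other l) -> (d s q <= 5 * r0)%R -> dist d s (Gam' :|: Gam (other l)) <= (5 * r0)%:E.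
  move=> q qG dq; apply: le_trans (dist_le (_ : q \in Gam' :|: Gam (other l))) _; first by rewrite inE qG orbT.
  by rewrite lee_fin.
case: (hcov' s) => hs.
- case: (hind' l) => _ _ h3; have [q qG dq] := h3 _ hs.
  case qG' : (q \in Gam').
    apply: le_trans (dist_le (_ : q \in Gam' :|: Gam (other l))) _; first by rewrite inE qG'.
    by rewrite lee_fin; clear -dq r0ge; lra.
  move: qG'; rewrite hG' qG /= => /negbT; rewrite -leNgt => /dist_ex [q' q'G dq'].
  apply: (hCo q' q'G); have := hdt s q q'; move=> H; clear -H dq dq' r0ge; lra.
- case: (hind' (other l)) => _ _ h3; have [q qG dq] := h3 _ hs.
  by apply: (hCo q qG); clear -dq r0ge; lra.
Qed.
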